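(* Let $(X,d,\mu)$ be a metric space with a Borel measure $\mu$ such that there is $r>0$ with $\inf_{y\in X}\mu(B(y,r))>0$. Fix $x_0\in X$. If $\lim_{l\to\infty}\frac1l\log\mathrm{vol}_\delta^{x_0}(l)=0$ for every $\delta>0$, then $h_\infty(X)=0$.
   Context: $B(y,r)$ is the closed ball. For $\delta>0$ a $\delta$-path is a sequence $(y_0,\dots,y_n)$ with $d(y_{i-1},y_i)\le\delta$; $[x]_\delta$ is the set of points connected to $x$ by a $\delta$-path; $B_\delta(y,n)=\{y_n:\exists\ \delta\text{-path }(y,y_1,\dots,y_n)\}$. Define $\mathrm{vol}_\delta^{x}(l)=\sup_{y\in[x]_\delta}\mu(B_\delta(y,l))$. Coarse entropy $h_\infty(X)=\lim_{\delta\to\infty}\lim_{R\to\infty}\limsup_{n\to\infty}\frac1n\log s(n,R,\delta,x_0)$, where $s(n,R,\delta,x_0)$ is the supremum of cardinalities of $R$-separated sets of $\delta$-paths of length $n$ starting at $x_0$, paths compared by $\max_i d(y_i,z_i)$. *)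

(* Defs.v *)
From HB Require Import structures.
From mathcomp Require Import all_boot all_order all_algebra.
From mathcomp Require Import all_classical all_reals all_analysis.
Set Implicit Arguments. Unset Strict Implicit. Unset Printing Implicit Defensive.
Import Order.TTheory GRing.Theory Num.Theory.
Import numFieldNormedType.Exports.
Local Open Scope classical_set_scope.
Local Open Scope ring_scope.

Section CoarseDefs.
Variables (R : realType) (X : Type) (d : X -> X -> R).

Definition is_metric :=
  [/\ forall x y, d x y = 0 <-> x = y,
      forall x y, d x y = d y x &
      forall x y z, d x z <= d x y + d y z].

Definition d_open (A : set X) : Prop :=
  forall x, A x -> exists2 e : R, 0 < e & [set y | d x y < e] `<=` A.

Definition cball (y : X) (r : R) : set X := [set z | d y z <= r].

Definition Bdelta (delta : R) (y : X) (n : nat) : set X :=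
  [set z | exists p : nat -> X,
     [/\ p 0%N = y, p n = z & forall i, (i < n)%N -> d (p i) (p i.+1) <= delta]].

Definition dclass (delta : R) (x : X) : set X :=
  [set z | exists n, Bdelta delta x n z].

Definition is_dpath (delta : R) (x0 : X) (n : nat) (p : 'I_n.+1 -> X) : Prop :=
  p ord0 = x0 /\ forall i : 'I_n.+1, (i < n)%N -> d (p i) (p (inord i.+1)) <= delta.

Definition path_dist (n : nat) (p q : 'I_n.+1 -> X) : R :=
  \big[Num.max/0]_(i < n.+1) d (p i) (q i).

(* s(n,R,delta,x0): supremum of cardinalities of R-separated sets of
   delta-paths of length n starting at x0; a set of cardinality k is
   given by an injective enumeration f : 'I_k -> paths. *)
Definition sep_count (n : nat) (Rs delta : R) (x0 : X) : \bar R :=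
  ereal_sup [set (k%:R)%:E | k in
    [set k : nat | exists f : 'I_k -> ('I_n.+1 -> X),
       [/\ injective f, forall i, is_dpath delta x0 (f i) &
           forall i j, i != j -> Rs < path_dist (f i) (f j)]]].

Definition entropy_seq (Rs delta : R) (x0 : X) (n : nat) : \bar R :=
  ((n%:R)^-1)%:E * lne (sep_count n Rs delta x0).

Definition entropy_limsup (Rs delta : R) (x0 : X) : \bar R :=
  limn_esup (entropy_seq Rs delta x0).

(* "h_infty(X) = h": both iterated limits exist and equal h *)
Definition coarse_entropy_is (x0 : X) (h : \bar R) : Prop :=
  exists H : R -> \bar R,
    (forall delta : R,
        entropy_limsup Rs delta x0 @[Rs --> +oo] --> H delta) /\
    H delta @[delta --> +oo] --> h.
End CoarseDefs.

Section MeasDefs.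
Variables (R : realType) (disp : measure_display) (T : measurableType disp).
(* outer measure induced by mu (agrees with mu on measurable sets) *)
Definition outer (mu : set T -> \bar R) (A : set T) : \bar R :=
  ereal_inf [set mu B | B in [set B | measurable B /\ A `<=` B]].
End MeasDefs.

Definition vol_delta (R : realType) (disp : measure_display) (T : measurableType disp)
  (d : T -> T -> R) (mu : set T -> \bar R) (x0 : T) (delta : R) (l : nat) : \bar R :=
  ereal_sup [set outer mu (Bdelta d delta y l) | y in dclass d delta x0].

(* Main.v *)
Require Import Defs.
From HB Require Import structures.
From mathcomp Require Import all_boot all_order all_algebra.
From mathcomp Require Import all_classical all_reals all_analysis.
From mathcomp Require Import zify ring lra.
Import Order.TTheory GRing.Theory Num.Theory.
Import numFieldNormedType.Exports.
Local Open Scope classical_set_scope.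
Local Open Scope ring_scope.

Section Helpers.
Variable R : realType.
Local Open Scope ereal_scope.

Lemma limn_esup_le_ev (u : (\bar R)^nat) (l : \bar R) N :
  (forall n, (N <= n)%N -> u n <= l) -> limn_esup u <= l.
Proof.
move=> h; rewrite /limn_esup /limf_esup; apply: ge_ereal_inf.
exists (ereal_sup (u @` [set n | (N <= n)%N])).
  by exists [set n | (N <= n)%N] => //; exists N.
by apply: ge_ereal_sup => _ [n hn <-]; apply: h.
Qed.

Lemma limn_esup_mono (u v : (\bar R)^nat) :
  (forall n, u n <= v n) -> limn_esup u <= limn_esup v.
Proof.
move=> h; rewrite !limn_esup_lim; apply: lee_lim; try exact: is_cvg_esups.
apply: nearW => n; rewrite /esups /=; apply: ge_ereal_sup => _ [k hk <-].
apply: le_trans (h k) _; apply: ereal_sup_ubound; by exists k.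
Qed.

Lemma limn_esup_ge0 (u : (\bar R)^nat) : (forall n, 0 <= u n) -> 0 <= limn_esup u.
Proof.
move=> h; apply: limf_esup_ge0 => //.
Qed.

Lemma cvge0_eps (f : R -> \bar R) :
  (forall eps : R, (0 < eps)%R -> \forall x \near +oo%R, 0 <= f x <= eps%:E) ->
  f x @[x --> +oo%R] --> 0.
Proof.
move=> H; apply/fine_cvgP; split.
  apply: filterS (H 1%R ltr01) => x /andP[h0 h1].
  by rewrite ge0_fin_numE // (le_lt_trans h1) ?ltry.
apply/cvgrPdist_le => eps eps0; apply: filterS (H eps eps0) => x /=.
case: (f x) => [a| |] /=.
- by rewrite !lee_fin => /andP[h0 h1]; rewrite sub0r normrN ger0_norm.
- by move=> _; rewrite subrr normr0 ltW.
- by [].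
Qed.

Lemma vol_extract (V : nat -> \bar R) (eps : R) : (0 < eps)%R ->
  ((l%:R^-1)%:E * lne (V l)) @[l --> \oo] --> 0 ->
  exists N, forall l, (N <= l)%N -> exists w : R,
     [/\ (0 < w)%R, V l = w%:E & (ln w <= l%:R * eps)%R].
Proof.
move=> e0 /fine_cvgP [hfin /cvgrPdist_le /(_ eps e0) hb].
have [N _ HN] := filterI hfin hb.
exists (maxn N 1) => l hl.
have [hf hd] : _ /\ _ := HN l (ltac:(rewrite /=; lia)).
have l0 : (0 < l%:R :> R)%R by rewrite ltr0n; lia.
have il0 : (0 < l%:R^-1 :> R)%R by rewrite invr_gt0.
move: hf hd; rewrite /=; case: (V l) => [w| |] /=.
- case: ifPn => w0.
    by rewrite mulrNy gtr0_sg // mul1e.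
  move=> _; rewrite sub0r normrN => h; exists w; split => //.
    by rewrite ltNge.
  rewrite -EFinM /= in h.
  have := le_trans (ler_norm _) h.
  by rewrite -(ler_pM2l l0) mulrA mulfV ?mul1r // gt_eqF.
- by rewrite mulry gtr0_sg // mul1e.
- by rewrite mulrNy gtr0_sg // mul1e.
Qed.

End Helpers.

Section Paths.
Variables (R : realType) (disp : measure_display) (T : measurableType disp) (d : T -> T -> R).
Hypothesis Hm : is_metric d.
Variable del : R.
Hypothesis del0 : 0 <= del.

Lemma dxx x : d x x = 0.
Proof. by case: Hm => H _ _; apply/H. Qed.

Lemma dsym x y : d x y = d y x.
Proof. by case: Hm. Qed.

Lemma dtri x y z : d x z <= d x y + d y z.
Proof. by case: Hm. Qed.

Lemma dge0 x y : 0 <= d x y.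
Proof.
have := dtri x y x; rewrite dxx (dsym y x) => h.
by rewrite -(@pmulr_rge0 _ 2) // mulr2n mulrDl !mul1r.
Qed.

Local Notation Bd := (Bdelta d del).

Lemma Bd_refl x : Bd x 0 x.
Proof. by exists (fun _ => x); split. Qed.

Lemma Bd_one x y : d x y <= del -> Bd x 1 y.
Proof.
move=> h; exists (fun i => if i is 0%N then x else y); split => //.
by case.
Qed.

Lemma Bd_mono x y a b : (a <= b)%N -> Bd x a y -> Bd x b y.
Proof.
move=> ab [p [p0 pa pd]]; exists (fun i => p (minn i a)); split.
- by rewrite min0n.
- have -> : minn b a = a by lia.
  by [].
move=> i ib /=; case: (ltnP i a) => ia.
  have -> : minn i.+1 a = i.+1 by lia.
  by apply: pd.
have -> : minn i.+1 a = a by lia.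
by rewrite dxx.
Qed.

Lemma Bd_trans x y z a b : Bd x a y -> Bd y b z -> Bd x (a + b) z.
Proof.
move=> [p [p0 pa pd]] [q [q0 qb qd]].
exists (fun i => if (i <= a)%N then p i else q (i - a)%N); split.
- by rewrite leq0n.
- case: (leqP (a + b) a) => h.
    have b0 : b = 0%N by lia.
    by move: qb; rewrite b0 addn0 q0 pa.
  by rewrite addKn.
move=> i ib /=; case: (ltnP i a) => ia.
  by rewrite (ltnW ia); apply: pd.
case: (leqP i a) => ia'.
  have ea : i = a by apply/eqP; rewrite eqn_leq ia ia'.
  rewrite ea subSnn pa -q0; apply: qd; lia.
have -> : (i.+1 - a = (i - a).+1)%N by lia.
by apply: qd; lia.
Qed.

Arguments Bd_trans {x y z a b}.

Lemma Bd_sym x y a : Bd x a y -> Bd y a x.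
Proof.
move=> [p [p0 pa pd]]; exists (fun i => p (a - i)%N); split.
- by rewrite subn0.
- by rewrite subnn.
move=> i ia /=; rewrite dsym.
have -> : (a - i = (a - i.+1).+1)%N by lia.
by apply: pd; lia.
Qed.

Arguments Bd_sym {x y a}.

Lemma Bd_d x y a : Bd x a y -> d x y <= a%:R * del.
Proof.
move=> [p [p0 pa pd]]; rewrite -p0 -pa.
suff : forall i, (i <= a)%N -> d (p 0%N) (p i) <= i%:R * del by apply.
elim => [|i IH] ia; first by rewrite dxx mul0r.
apply: le_trans (dtri _ (p i) _) _.
rewrite -addn1 natrD mulrDl mul1r lerD //; first by apply: IH; lia.
by rewrite addn1; apply: pd.
Qed.

Arguments Bd_d {x y a}.

Lemma class_Bd x0 c y a : dclass d del x0 c -> Bd c a y -> dclass d del x0 y.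
Proof. by move=> [n h] h2; exists (n + a)%N; apply: Bd_trans h h2. Qed.


Lemma family (P : R) (A m : nat) (Cl : T -> Prop) :
  0 <= P ->
  (forall (I : finType) (c : T) (z : I -> T), Cl c -> (forall j, Bd c A (z j)) ->
     (forall j j', j != j' -> ~ Bd (z j) 3 (z j')) -> (#|I|%:R <= P)) ->
  (forall c y a, Cl c -> Bd c a y -> Cl y) ->
  (m + 3 <= A)%N ->
  forall K (I : finType) (c : T) (W : I -> nat -> T), Cl c ->
   (forall i, Bd c A (W i 0%N)) ->
   (forall i t, Bd (W i t) m (W i t.+1)) ->
   (forall i i', i != i' -> exists2 t, (t < K)%N & ~ Bd (W i t) 6 (W i' t)) ->
   #|I|%:R <= P ^+ K.
Proof.
move=> P0 Hpack Hcl hA; elim => [|K IH] I c W Cc Wc Wch Wsep.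
  rewrite expr0 -[X in _ <= X]mulr1n ler_nat; apply/fintype_le1P => i i'.
  apply/eqP; apply/negPn/negP => ne.
  by have [t] := Wsep _ _ ne.
pose sepS (S : {set I}) := [forall j, [forall j', ((j \in S) && (j' \in S) && (j != j'))
   ==> ~~ `[< Bd (W j 0%N) 3 (W j' 0%N) >]]].
have sepSP S : sepS S <-> (forall j j', j \in S -> j' \in S -> j != j' ->
    ~ Bd (W j 0%N) 3 (W j' 0%N)).
  split.
    move=> /forallP h j j' jS j'S ne; have /forallP/(_ j') := h j.
    by rewrite jS j'S ne /= => /negP hb hb'; apply: hb; apply/asboolP.
  move=> h; apply/forallP => j; apply/forallP => j'; apply/implyP.
  move=> /andP[/andP[jS j'S] ne]; apply/negP => /asboolP; exact: h.
have sep0 : sepS finset.set0 by apply/sepSP => j j'; rewrite finset.in_set0.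
case: (arg_maxnP (fun S : {set I} => #|S|) sep0) => S /sepSP sepS_S maxS.
have cover : forall i, exists j, j \in S /\ Bd (W j 0%N) 3 (W i 0%N).
  move=> i; case: (boolP (i \in S)) => iS.
    by exists i; split => //; apply: (@Bd_mono _ _ 0%N) => //; apply: Bd_refl.
  apply/not_existsP => hno.
  have : sepS (i |: S).
    apply/sepSP => j j'; rewrite !in_setU1.
    move=> /predU1P[-> | jS] /predU1P[-> | j'S] ne.
    - by rewrite eqxx in ne.
    - by move=> /Bd_sym hb; apply: (hno j'); split.
    - by move=> hb; apply: (hno j); split.
    - exact: sepS_S.
  move=> /maxS; rewrite cardsU1 iS /=; lia.
have [g gP] := boolp.choice cover.
have eq1 : (#|I|%:R : R) = \sum_(j in S) \sum_(i | g i == j) 1.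
  have -> : (#|I|%:R : R) = \sum_(i : I) 1 by rewrite sumr_const.
  rewrite (partition_big g (fun j => j \in S)) //=.
  by move=> i _; case: (gP i).
rewrite eq1 exprS.
apply: (@le_trans _ _ (\sum_(j in S) P ^+ K)).
  apply: ler_sum => j jS.
  have -> : \sum_(i | g i == j) (1 : R) = #|{: {i : I | g i == j}}|%:R.
    by rewrite card_sig sumr_const.
  have hb (i : {i : I | g i == j}) : Bd (W j 0%N) 3 (W (val i) 0%N).
    by have [_] := gP (val i); rewrite (eqP (valP i)).
  apply: (IH _ (W j 0%N) (fun i t => W (val i) t.+1)).
  - exact: Hcl Cc (Wc j).
  - move=> i; apply: (@Bd_mono _ _ (3 + m)%N); first by lia.
    exact: Bd_trans (hb i) (Wch _ 0%N).
  - by move=> i t; apply: Wch.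
  - move=> i i' ne; have ne' : val i != val i' by [].
    have [[|t] tK nb] := Wsep _ _ ne'.
      by exfalso; apply: nb; apply: (Bd_trans (Bd_sym (hb i)) (hb i')).
    by exists t.
rewrite sumr_const -mulr_natl ler_wpM2r ?exprn_ge0 //.
have -> : #|S| = #|{: {j : I | j \in S}}| by rewrite card_sig; apply: eq_card.
apply: (Hpack _ c (fun j => W (val j) 0%N) Cc).
  by move=> j; apply: Wc.
move=> j j' ne; apply: sepS_S; [exact: valP | exact: valP | by []].
Qed.


Variable mu : {measure set T -> \bar R}.
Hypothesis Hmeas : @measurable disp T = <<s d_open d >>.

Lemma cball_meas y r : measurable (cball d y r).
Proof.
rewrite -[cball _ _ _]setCK; apply: measurableC; rewrite Hmeas.
apply: sub_gen_smallest => z /= hz.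
have hr : r < d y z by rewrite ltNge; apply/negP.
exists (d y z - r); first by rewrite subr_gt0.
move=> w /= hw; rewrite /cball /= => hyw; have := dtri y w z; rewrite (dsym w z).
move: hw hyw; set a := d y z; set b := d z w; set c := d y w.
move=> *; lra.
Qed.

Lemma packing_ord (r e : R) x0 (A M : nat) (c : T) (z : 'I_M -> T) :
  r <= del -> (forall y, e%:E <= mu (cball d y r))%E ->
  dclass d del x0 c -> (forall j, Bd c A (z j)) ->
  (forall j j', j != j' -> ~ Bd (z j) 3 (z j')) ->
  ((M%:R * e)%:E <= vol_delta d mu x0 del (A + 1))%E.
Proof.
move=> rd He Cc zc zsep.
pose F k := cball d (z k) r.
have mF k : measurable (F k) by apply: cball_meas.
have tF : trivIset [set: 'I_M] F.
  move=> i j _ _ [x [/= hi hj]]; apply/eqP; apply/negPn/negP => ne.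
  apply: (zsep _ _ ne); apply: (@Bd_mono _ _ (1 + 1)%N) => //.
  apply: Bd_trans; apply: Bd_one; first exact: le_trans hi rd.
  by rewrite dsym; exact: le_trans hj rd.
apply: (@le_trans _ _ (outer mu (Bd c (A + 1)))); last first.
  by apply: ereal_sup_ubound; exists c.
apply: le_ereal_inf_tmp => _ [B [mB sB] <-].
apply: (@le_trans _ _ (mu (\big[setU/set0]_(k < M) F k))); last first.
  apply: le_measure; rewrite ?inE //; first exact: bigsetU_measurable.
  apply: (big_ind (fun S => S `<=` B)) => //.
    by move=> S1 S2 h1 h2 x [/h1|/h2].
  move=> k _ x hk; apply: sB.
  apply: Bd_trans (zc k) _; apply: Bd_one; exact: le_trans hk rd.
rewrite measure_bigsetU_ord //.
apply: (@le_trans _ _ (\sum_(k < M) e%:E)); last first.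
  by apply: lee_sum => k _; apply: He.
by rewrite sumEFin sumr_const card_ord mulr_natl.
Qed.

Lemma packing (r e : R) x0 (A : nat) (I : finType) (c : T) (z : I -> T) :
  r <= del -> (forall y, e%:E <= mu (cball d y r))%E ->
  dclass d del x0 c -> (forall j, Bd c A (z j)) ->
  (forall j j', j != j' -> ~ Bd (z j) 3 (z j')) ->
  ((#|I|%:R * e)%:E <= vol_delta d mu x0 del (A + 1))%E.
Proof.
move=> rd He Cc zc zsep.
apply: (@packing_ord r e x0 A #|I| c (fun k => z (enum_val k))) => //.
move=> j j' ne; apply: zsep; apply: contra ne => /eqP /enum_val_inj ->.
by [].
Qed.

Lemma path_dist_gt (n : nat) (p q : 'I_n.+1 -> T) (Rs : R) :
  0 <= Rs -> Rs < path_dist d p q -> exists j, Rs < d (p j) (q j).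
Proof.
move=> R0 h; apply/not_existsP => hn; move: h; apply/negP; rewrite -leNgt.
rewrite /path_dist; apply: (big_ind (fun x => x <= Rs)) => //.
  by move=> x y hx hy; rewrite ge_max hx hy.
by move=> j _; rewrite leNgt; apply/negP => /(hn j).
Qed.

Section Qpath.
Variables (x0 : T) (n : nat) (p : 'I_n.+1 -> T).
Hypothesis hp : is_dpath d del x0 p.
Let q (s : nat) := p (inord (minn s n)).

Lemma q0 : q 0%N = x0.
Proof.
rewrite /q min0n; case: hp => <- _; congr p; apply: val_inj => /=.
by rewrite inordK.
Qed.

Lemma qval (j : 'I_n.+1) : q j = p j.
Proof.
rewrite /q; have -> : minn j n = j.
  by have := ltn_ord j; lia.
by rewrite inord_val.
Qed.

Lemma qchain a b : Bd (q a) b (q (a + b)).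
Proof.
exists (fun s => q (a + s)); split => //; first by rewrite addn0.
move=> s _; rewrite /q addnS; case: (ltnP (a + s) n) => h.
  have -> : minn (a + s).+1 n = (a + s).+1 by lia.
  have hj : nat_of_ord (inord (a + s) : 'I_n.+1) = (a + s)%N by rewrite inordK //; lia.
  by case: hp => _ /(_ (inord (a + s))); rewrite hj; apply.
have -> : minn (a + s).+1 n = n by lia.
by rewrite dxx.
Qed.
End Qpath.

Lemma sep_bound (r e v Rs : R) x0 (m n : nat) :
  0 < del -> r <= del -> 0 < e -> (forall y, e%:E <= mu (cball d y r))%E ->
  (0 < m)%N -> vol_delta d mu x0 del (m + 3 + 1) = v%:E ->
  del * (2 * m + 7)%:R <= Rs ->
  (sep_count d n Rs del x0 <= ((v / e) ^+ (n %/ m + 2))%:E)%E.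
Proof.
move=> delp rd e0 He m0 hv hRs.
have Rs0 : 0 <= Rs by apply: le_trans hRs; rewrite mulr_ge0 // ltW.
have Hpack : forall (I : finType) (c : T) (z : I -> T), dclass d del x0 c ->
    (forall j, Bd c (m + 3) (z j)) ->
    (forall j j', j != j' -> ~ Bd (z j) 3 (z j')) -> (#|I|%:R <= v / e).
  move=> I c z Cc zc zs; rewrite ler_pdivlMr //.
  by rewrite -lee_fin -hv; exact: (@packing r e x0 (m + 3) I c z rd He Cc zc zs).
have P0 : 0 <= v / e.
  have := Hpack 'I_0 x0 (fun _ => x0); rewrite card_ord; apply.
  - by exists 0%N; apply: Bd_refl.
  - by case.
  - by case.
apply: ub_ereal_sup => _ [k [f [finj fpath fsep]] <-].
rewrite lee_fin.
pose W (i : 'I_k) (t : nat) := f i (inord (minn (t * m) n)).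
have -> : (k%:R : R) = #|'I_k|%:R by rewrite card_ord.
apply: (@family (v / e) (m + 3) m (dclass d del x0) P0 Hpack (@class_Bd x0) (leqnn _) _ _ x0 W).
- by exists 0%N; apply: Bd_refl.
- move=> i; rewrite /W mul0n.
  have -> := @q0 _ _ _ (fpath i).
  by apply: (@Bd_mono _ _ 0%N) => //; apply: Bd_refl.
- move=> i t; rewrite /W mulSn addnC; exact: @qchain _ _ _ (fpath i) _ _.
move=> i i' ne.
have /(@path_dist_gt _ _ _ _ Rs0) [j hj] := fsep _ _ ne.
exists (j %/ m)%N.
  have := ltn_ord j; have := leq_div2r m (ltnSE (ltn_ord j)); lia.
move=> hb; move: hj; apply/negP; rewrite -leNgt.
have hd := Bd_d hb.
have e1 : (j %/ m * m + j %% m)%N = j by rewrite -divn_eq.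
have c1 := @qchain _ _ _ (fpath i) (j %/ m * m) (j %% m).
have c2 := @qchain _ _ _ (fpath i') (j %/ m * m) (j %% m).
rewrite e1 !qval in c1 c2.
have d1 := Bd_d c1; have d2 := Bd_d c2.
have hm : ((j %% m)%:R : R) <= m%:R by rewrite ler_nat; apply: ltnW; apply: ltn_pmod.
move: hd d1 d2; rewrite /W.
set a := f i (inord _); set b := f i' (inord _).
move=> hd d1 d2.
have t1 := dtri (f i j) a (f i' j).
have t2 := dtri a b (f i' j).
rewrite dsym in d1.
apply: le_trans t1 _; apply: le_trans hRs.
rewrite natrD natrM.
have h3 : (j %% m)%:R * del <= m%:R * del by rewrite ler_wpM2r // ltW.
have : d a b + d b (f i' j) <= 6 * del + m%:R * del by apply: lerD => //; apply: le_trans d2 h3.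
have := le_trans d1 h3.
move: t2; set u := d _ _; set w := d _ _; set z := d _ _.
move=> *; nra.
Qed.

Lemma sep_count_ge1 n Rs x0 : (1 <= sep_count d n Rs del x0)%E.
Proof.
apply: ereal_sup_ubound; exists 1%N => //.
exists (fun _ _ => x0); split.
- by move=> i j _; rewrite !ord1.
- by move=> i; split => // j _; rewrite dxx.
- by move=> i j; rewrite !ord1 eqxx.
Qed.

Lemma entropy_seq_ge0 Rs x0 n : (0 <= entropy_seq d Rs del x0 n)%E.
Proof.
rewrite /entropy_seq; apply: mule_ge0; first by rewrite lee_fin invr_ge0.
by rewrite lne_ge0 sep_count_ge1.
Qed.

Lemma arith (L eps : R) (m n K : nat) : (0 < m)%N -> (m <= n)%N ->
  (K * m <= 3 * n)%N -> 3 * L <= eps * m%:R -> 0 <= eps ->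
  n%:R^-1 * (L *+ K) <= eps.
Proof.
move=> m0 mn hK hL e0.
have n0 : (0 < n%:R :> R) by rewrite ltr0n; lia.
have m0' : (0 < m%:R :> R) by rewrite ltr0n.
have hK' : K%:R * m%:R <= 3 * n%:R :> R.
  by rewrite -natrM -(natrM _ 3) ler_nat.
rewrite -[L *+ K]mulr_natl -(ler_pM2l n0) mulrA mulfV ?gt_eqF // mul1r.
have K0 : (0 <= K%:R :> R) by [].
nra.
Qed.

Lemma key (r e : R) x0 : 0 < del -> r <= del -> 0 < e ->
  (forall y, e%:E <= mu (cball d y r))%E ->
  (((l%:R)^-1)%:E * lne (vol_delta d mu x0 del l))%E @[l --> \oo] --> 0%E ->
  entropy_limsup d Rs del x0 @[Rs --> +oo] --> 0%E.
Proof.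
move=> delp rd e0 He Hv; apply: cvge0_eps => eps eps0.
set L := `|ln e|.
pose B := Num.Def.archi_bound (12 * L / eps).
have hB : 12 * L / eps < B%:R.
  by apply: archi_boundP; apply: divr_ge0; [apply: mulr_ge0 => //; exact: normr_ge0 | exact: ltW].
have e8 : (0 : R) < eps / 8 by rewrite divr_gt0.
have [N HN] := @vol_extract _ _ (eps / 8) e8 Hv.
pose m := maxn (maxn 8 B) N.
have mN : (N <= m + 3 + 1)%N.
  by rewrite /m -addnA; apply: leq_trans (leq_maxr _ _) (leq_addr _ _).
have [w [w0 hw lnw]] := HN (m + 3 + 1)%N mN.
have m8 : (8 <= m)%N by apply: leq_trans (leq_maxl 8 B) (leq_maxl _ N).
have mB : (B <= m)%N by apply: leq_trans (leq_maxr 8 B) (leq_maxl _ N).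
have m0 : (0 < m)%N by apply: leq_trans m8.
clearbody m.
exists (del * (2 * m + 7)%:R); split; first exact: num_real.
move=> Rs hRs; apply/andP; split.
  by apply: limn_esup_ge0 => n; apply: entropy_seq_ge0.
apply: (@limn_esup_le_ev _ _ _ m) => n hn.
have hs := @sep_bound r e w Rs x0 m n delp rd e0 He m0 hw (ltW hRs).
have P0 : 0 < w / e by rewrite divr_gt0.
rewrite /entropy_seq.
apply: le_trans (_ : ((n%:R^-1)%:E * lne ((w / e) ^+ (n %/ m + 2))%:E <= _)%E).
  apply: lee_wpmul2l; first by rewrite lee_fin invr_ge0.
  rewrite lee_lne // in_itv /= ?leey ?andbT //.
    by apply: le_trans (sep_count_ge1 _ _ _).
  by rewrite lee_fin exprn_ge0 // ltW.
rewrite lne_EFin ?exprn_gt0 // lnXn // -EFinM lee_fin.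
apply: (@arith _ _ m n); [exact: m0 | exact: hn | | | exact: ltW].
  have hq := leq_trunc_div n m; move: hq.
  set q := (n %/ m)%N; set qm := (q * m)%N => hq.
  rewrite mulnDl -/qm.
  apply: leq_trans (leq_add hq (leq_mul (leqnn 2) hn)) _.
  by rewrite -mulSn.
rewrite lnM ?posrE ?invr_gt0 // lnV ?posrE //.
have hL : - ln e <= L by rewrite /L -normrN ler_norm.
have hB' : 12 * L < eps * B%:R.
  by rewrite -(ltr_pdivrMl _ _ eps0) mulrC.
have hBm : B%:R <= m%:R :> R by rewrite ler_nat.
have hm8 : 8 <= m%:R :> R by rewrite ler_nat.
have p1 : eps * B%:R <= eps * m%:R by rewrite ler_wpM2l // ltW.
have p2 : eps * 8 <= eps * m%:R by rewrite ler_wpM2l // ltW.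
have lnw' : ln w <= eps * m%:R / 8 + eps / 2.
  apply: le_trans lnw _; rewrite !natrD.
  have -> : (m%:R + 3%:R + 1) * (eps / 8) = eps * m%:R / 8 + eps / 2 :> R.
    by field.
  by [].
lra.
Qed.

End Paths.

Lemma sep_count_mono (R : realType) (X : Type) (d : X -> X -> R) n Rs del del' x0 :
  del <= del' -> (sep_count d n Rs del x0 <= sep_count d n Rs del' x0)%E.
Proof.
move=> h; apply: ereal_sup_le => _ [k [f [fi fp fs]] <-]; exists k => //.
exists f; split => // i; case: (fp i) => p0 pd; split => // j hj.
exact: le_trans (pd j hj) h.
Qed.

Theorem mainTheorem15 (R : realType) (disp : measure_display)
  (T : measurableType disp) (d : T -> T -> R)
  (mu : {measure set T -> \bar R}) (x0 : T) :
  is_metric d ->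
  (@measurable disp T = <<s d_open d >>) ->
  (exists2 r : R, 0 < r &
     (0 < ereal_inf [set mu (cball d y r) | y in [set: T]])%E) ->
  (forall delta : R, 0 < delta ->
     (((l%:R)^-1)%:E * lne (vol_delta d mu x0 delta l))%E @[l --> \oo] --> 0%E) ->
  coarse_entropy_is d x0 0%E.
Proof.
move=> Hm Hmeas [r r0 hc] Hv.
have [e [e0 He]] : exists e : R, 0 < e /\ forall y, (e%:E <= mu (cball d y r))%E.
  move: hc; set c0 := ereal_inf _ => hc.
  have lb y : (c0 <= mu (cball d y r))%E by apply: ereal_inf_lbound; exists y.
  clearbody c0; case: c0 hc lb => [c| |] hc lb.
  - by exists c; split => //; rewrite -lte_fin.
  - by exists 1; split => // y; apply: le_trans (lb y); exact: leey.
  - by [].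
exists (fun del : R => if del < 0 then -oo%E else 0%E); split.
  move=> del; case: (ltP del 0) => hdel.
    apply: cvg_near_cst; apply: nearW => Rs.
    apply/eqP; rewrite -leeNy_eq.
    apply: (@limn_esup_le_ev _ _ _ 1%N) => n hn.
    rewrite /entropy_seq.
    have hs : (sep_count d n Rs del x0 <= 0)%E.
      apply: ge_ereal_sup => _ [[|k] [f [_ fp _]] <-] //.
      exfalso; have [_ pd] := fp ord0.
      have := pd ord0 hn; have := @dge0 _ _ _ _ Hm (f ord0 ord0) (f ord0 (inord 1)).
      move=> h1 h2; have := le_trans h1 h2; rewrite leNgt hdel.
      by [].
    rewrite le0_lneNy // mulrNy gtr0_sg ?mul1e //.
    by rewrite invr_gt0 ltr0n.
  have m0 : 0 < Num.max del r by rewrite lt_max r0 orbT.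
  apply: (@squeeze_cvge _ _ _ _ (cst 0%E) _
     (fun Rs => entropy_limsup d Rs (Num.max del r) x0)).
  - apply: nearW => Rs; apply/andP; split.
      by apply: limn_esup_ge0 => n; apply: (@entropy_seq_ge0 _ _ _ _ Hm _ hdel).
    apply: limn_esup_mono => n; rewrite /entropy_seq.
    apply: lee_wpmul2l; first by rewrite lee_fin invr_ge0.
    rewrite lee_lne ?in_itv /= ?leey ?andbT.
    + by apply: sep_count_mono; rewrite le_max lexx.
    + by apply: le_trans (@sep_count_ge1 _ _ _ _ Hm _ hdel _ _ _).
    + by apply: le_trans (@sep_count_ge1 _ _ _ _ Hm _ (ltW m0) _ _ _).
  - exact: cvg_cst.
  - apply: (@key _ _ _ _ Hm _ (ltW m0) _ Hmeas r e x0 m0 _ e0 He (Hv _ m0)).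
    by rewrite le_max lexx orbT.
apply: cvg_near_cst.
exists 0; split; first exact: num_real.
by move=> x hx; rewrite ltNge (ltW hx).
Qed.
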